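(* Let $G_0,G_1\in\mathbb{Z}$, let $(G_n)_{n\ge0}$ satisfy $G_n=G_{n-1}+G_{n-2}$ for $n\ge2$, and let $\mu = G_1^2 - G_0 G_1 - G_0^2$. Let $k \geq 1$ be odd and set $\ell_k = \gcd(G_{k+1} - G_1,\, G_{k+2} - G_2)$. If $2\mu$ divides $\ell_k$, then $\mathcal{G}^2_{G_0,G_1}(k\ell) = |2\mu|$ for all odd integers $\ell \geq 1$.
   Context: $\mathcal{G}^2_{G_0,G_1}(m)=\gcd\{\sum_{i=1}^m G_{n+i}^2 : n\ge 0\}$ (nonnegative gcd of this infinite set of integers). *)

(* Defs.v *)
From mathcomp Require Import all_boot all_order all_algebra.
Set Implicit Arguments. Unset Strict Implicit. Unset Printing Implicit Defensive.
Import Order.TTheory GRing.Theory Num.Theory.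
Local Open Scope ring_scope.

Fixpoint Gpair (G0 G1 : int) (n : nat) : int * int :=
  match n with
  | O => (G0, G1)
  | S m => let p := Gpair G0 G1 m in (p.2, p.1 + p.2)
  end.

Definition Gseq (G0 G1 : int) (n : nat) : int := (Gpair G0 G1 n).1.

Definition is_gcd_of_range (S : nat -> int) (d : int) : Prop :=
  0 <= d /\ (forall n, (d %| S n)%Z) /\
  (forall e : int, (forall n, (e %| S n)%Z) -> (e %| d)%Z).

Definition sqsum (G0 G1 : int) (m n : nat) : int :=
  \sum_(1 <= i < m.+1) (Gseq G0 G1 (n + i)) ^+ 2.

Definition Gcal2_is (G0 G1 : int) (m : nat) (g : int) : Prop :=
  is_gcd_of_range (sqsum G0 G1 m) g.

(* Main.v *)
Require Import Defs.
From mathcomp Require Import all_boot all_order all_algebra.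
From mathcomp Require Import ring.
Import Order.TTheory GRing.Theory Num.Theory.
Local Open Scope ring_scope.

Lemma Grec (G0 G1 : int) n : Gseq G0 G1 n.+2 = Gseq G0 G1 n + Gseq G0 G1 n.+1.
Proof. by []. Qed.

Lemma Gmu (G0 G1 : int) n :
  Gseq G0 G1 n.+1 ^+ 2 - Gseq G0 G1 n * Gseq G0 G1 n.+1 - Gseq G0 G1 n ^+ 2
  = (-1) ^+ n * (G1 ^+ 2 - G0 * G1 - G0 ^+ 2).
Proof.
elim: n => [|n IH]; first by rewrite expr0 mul1r.
rewrite Grec (exprS (-1)) mulN1r mulNr -IH; ring.
Qed.

Definition P (G0 G1 : int) i := Gseq G0 G1 i * Gseq G0 G1 i.+1.

Lemma sqsumE (G0 G1 : int) m n : sqsum G0 G1 m n = P G0 G1 (n + m)%N - P G0 G1 n.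
Proof.
elim: m => [|m IH].
  by rewrite /sqsum big_geq // addn0 subrr.
rewrite /sqsum big_nat_recr //= -/(sqsum G0 G1 m n) IH /P addnS Grec.
ring.
Qed.

Lemma normdvd (d x : int) : (d %| x)%Z -> (`|d| %| x)%Z.
Proof.
move=> h; case: (lerP 0 d) => hx; first by rewrite ger0_norm.
by rewrite ltr0_norm // dvdzE abszN.
Qed.

Lemma normdvd2 (d x : int) : (d %| x)%Z -> (d %| `|x|)%Z.
Proof.
move=> h; case: (lerP 0 x) => hx.
  by rewrite ger0_norm.
by rewrite ltr0_norm // rpredN.
Qed.

Theorem theorem4p11 (G0 G1 : int) (k : nat) :
  (1 <= k)%N -> odd k ->
  let mu := G1 ^+ 2 - G0 * G1 - G0 ^+ 2 in
  let lk := gcdz (Gseq G0 G1 k.+1 - Gseq G0 G1 1) (Gseq G0 G1 k.+2 - Gseq G0 G1 2) in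
  (2 * mu %| lk)%Z ->
  forall l : nat, (1 <= l)%N -> odd l ->
    Gcal2_is G0 G1 (k * l) `|2 * mu|.
Proof.
move=> _ oddk mu lk hd l _ oddl.
set d := 2 * mu in hd *.
set G := Gseq G0 G1.
have h1 : (d %| G k.+1 - G 1%N)%Z := dvdz_trans hd (dvdz_gcdl _ _).
have h2 : (d %| G k.+2 - G 2%N)%Z := dvdz_trans hd (dvdz_gcdr _ _).
have per : forall j, (d %| G (j + k)%N - G j)%Z /\ (d %| G (j.+1 + k)%N - G j.+1)%Z.
  elim => [|j [IH1 IH2]].
    split; last by rewrite addSn add0n.
    have -> : G (0 + k)%N - G 0%N = (G k.+2 - G 2%N) - (G k.+1 - G 1%N).
      by rewrite add0n /G !Grec; ring.
    by rewrite rpredB.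
  split => //.
  have -> : G (j.+2 + k)%N - G j.+2 = (G (j + k)%N - G j) + (G (j.+1 + k)%N - G j.+1).
    by rewrite /G !addSn !Grec; ring.
  by rewrite rpredD.
have perm : forall l j, (d %| G (j + k * l)%N - G j)%Z.
  elim => [|l' IH] j; first by rewrite muln0 addn0 subrr dvdz0.
  have -> : G (j + k * l'.+1)%N - G j =
     (G ((j + k * l') + k)%N - G (j + k * l')%N) + (G (j + k * l')%N - G j).
    by rewrite mulnS (addnC k) addnA; ring.
  by rewrite rpredD // (per _).1.
have oddm : odd (k * l) by rewrite oddM oddk oddl.
split; first exact: normr_ge0.
split.
  move=> n; apply: normdvd; rewrite sqsumE /P.
  have -> : Gseq G0 G1 (n + k * l)%N * Gseq G0 G1 (n + k * l)%N.+1 -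
            Gseq G0 G1 n * Gseq G0 G1 n.+1 =
     (G (n + k * l)%N - G n) * G (n + k * l)%N.+1 + G n * (G (n + k * l)%N.+1 - G n.+1).
    by rewrite /G; ring.
  rewrite rpredD //; first by apply: dvdz_mulr; exact: perm.
  by apply: dvdz_mull; have := perm l n.+1; rewrite addSn.
move=> e he.
suff: (e %| d)%Z.
  exact: normdvd2.
have -> : d = sqsum G0 G1 (k * l) 2 - 3 * sqsum G0 G1 (k * l) 1 + sqsum G0 G1 (k * l) 0.
  rewrite !sqsumE /P add0n !addSn !Grec.
  have M := Gmu G0 G1 (k * l).
  rewrite -signr_odd oddm expr1 in M.
  rewrite /d /mu; move: M; rewrite /= => M.
  have -> : Gseq G0 G1 0 = G0 by [].
  have -> : Gseq G0 G1 1 = G1 by [].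
  move: M; set a := Gseq G0 G1 (k * l); set b := Gseq G0 G1 (k * l).+1 => M.
  rewrite [RHS](_ : _ = -(b ^+ 2 - a * b - a ^+ 2) + (G1 ^+ 2 - G0 * G1 - G0 ^+ 2)); last by ring.
  rewrite M; ring.
by rewrite rpredD // ?rpredB // ?he // dvdz_mull.
Qed.
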